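(* rATL* and ATL* are equally expressive: (i) for every rATL* formula $\varphi$ and every $t\in\mathbb{B}_4$ there is an ATL* formula $\varphi_t$ with $V(s,\varphi)\succeq t\iff\mathcal{S},s\models\varphi_t$ for all concurrent game structures $\mathcal{S}$ and states $s$; and (ii) for every ATL* formula $\psi$ there is an rATL* formula $\psi^\star$ with $\mathcal{S},s\models\psi\iff V(s,\psi^\star)=1111$ for all concurrent game structures $\mathcal{S}$ and states $s$.
   Context: Fix a finite set $\mathrm{AP}$ of atomic propositions. A concurrent game structure (CGS) is a tuple $\mathcal{S}=(St,Ag,Ac,\delta,\ell)$ where $St$ is a finite set of states, $Ag$ a finite set of agents, $Ac$ a finite set of actions, $\ell:St\to 2^{\mathrm{AP}}$ a labeling, and $\delta:St\times AV\to St$ a transition function, where $AV$ is the set of action vectors for $Ag$ (an action vector for $A\subseteq Ag$ is a map $A\to Ac$). A state $s'$ is a successor of $s$ if $s'=\delta(s,v)$ for some $v\in AV$. A path is an infinite sequence $\pi=s_0s_1s_2\cdots$ of states with $s_{n+1}$ a successor of $s_n$ for all $n$; write $\pi[n]=s_n$ and $\pi[i..]$ for the suffix $s_is_{i+1}\cdots$. A strategy for an agent is a function $f:St^+\to Ac$. For $A\subseteq Ag$ and a set $F_A=\{f_a\mid a\in A\}$ of strategies, one for each agent in $A$, $out(s,F_A)$ is the set of paths $s_0s_1\cdots$ with $s_0=s$ such that for every $n\ge 0$ there is $v\in AV$ with $v(a)=f_a(s_0\cdots s_n)$ for all $a\in A$ and $s_{n+1}=\delta(s_n,v)$. $\mathbb{B}_4=\{1111,0111,0011,0001,0000\}$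 is totally ordered by $1111\succ0111\succ0011\succ0001\succ0000$; for $b=b_1b_2b_3b_4\in\mathbb{B}_4$ and $k\in\{1,2,3,4\}$, $b[k]=b_k$; max and min on $\mathbb{B}_4$ refer to this order, and on bits to $0<1$. rATL* formulas: state formulas $\varphi::=p\mid\neg\varphi\mid\varphi\vee\varphi\mid\varphi\wedge\varphi\mid\varphi\to\varphi\mid\langle\!\langle A\rangle\!\rangle\Phi\mid[\![A]\!]\Phi$ and path formulas $\Phi::=\varphi\mid\neg\Phi\mid\Phi\vee\Phi\mid\Phi\wedge\Phi\mid\Phi\to\Phi\mid\dot\bigcirc\Phi\mid\dot\Diamond\Phi\mid\dot\Box\Phi$ ($p\in\mathrm{AP}$, $A$ a set of agents); an rATL* formula is a state formula. Valuation $V$ into $\mathbb{B}_4$: for state formulas, $V(s,p)=1111$ if $p\in\ell(s)$ else $0000$; $\vee,\wedge$ are max, min; $V(s,\neg\varphi)=0000$ if $V(s,\varphi)=1111$ else $1111$; $V(s,\varphi_1\to\varphi_2)=1111$ if $V(s,\varphi_1)\preceq V(s,\varphi_2)$ else $V(s,\varphi_2)$; $V(s,\langle\!\langle A\rangle\!\rangle\Phi)$ is the maximal $b$ such that there is a set $F_A$ of strategies (one per agent in $A$) with $V(\pi,\Phi)\succeq b$ for all $\pi\in out(s,F_A)$; $V(s,[\![A]\!]\Phi)$ is the maximal $b$ such that for every such $F_A$ some $\pi\in out(s,F_A)$ has $V(\pi,\Phi)\succeq b$. For path formulas: $V(\pi,\varphi)=V(\pi[0],\varphi)$ for state formulas $\varphi$;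 $\neg,\vee,\wedge,\to$ are as for state formulas (with $\pi$ in place of $s$); $V(\pi,\dot\bigcirc\Phi)[k]=V(\pi[1..],\Phi)[k]$; $V(\pi,\dot\Diamond\Phi)[k]=\max_{i\ge0}V(\pi[i..],\Phi)[k]$; $V(\pi,\dot\Box\Phi)=b_1b_2b_3b_4$ with $b_1=\min_{i\ge0}V(\pi[i..],\Phi)[1]$, $b_2=\max_{i\ge0}\min_{j\ge i}V(\pi[j..],\Phi)[2]$, $b_3=\min_{i\ge0}\max_{j\ge i}V(\pi[j..],\Phi)[3]$, $b_4=\max_{i\ge0}V(\pi[i..],\Phi)[4]$. ATL* is the standard logic of Alur, Henzinger and Kupferman with state formulas $\varphi::=p\mid\neg\varphi\mid\varphi\vee\varphi\mid\langle\!\langle A\rangle\!\rangle\Phi\mid[\![A]\!]\Phi$ (and derived connectives) and path formulas $\Phi::=\varphi\mid\neg\Phi\mid\Phi\vee\Phi\mid\bigcirc\Phi\mid\Diamond\Phi\mid\Box\Phi$ (and derived connectives), with Boolean satisfaction relation $\models$: $\mathcal{S},s\models\langle\!\langle A\rangle\!\rangle\Phi$ iff some $F_A$ has all $\pi\in out(s,F_A)$ satisfying $\Phi$; $\mathcal{S},s\models[\![A]\!]\Phi$ iff for every $F_A$ some $\pi\in out(s,F_A)$ satisfies $\Phi$; state formulas hold on a path iff they hold at its first state; $\bigcirc,\Diamond,\Box$ refer to the suffix $\pi[1..]$, some suffix, all suffixes respectively. *)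

(* Defs.v *)
From mathcomp Require Import all_boot.
From Stdlib Require Import ClassicalEpsilon.

Set Implicit Arguments.
Unset Strict Implicit.
Unset Printing Implicit Defensive.

Record cgs (AP Ag : finType) := CGS {
  st    : finType;
  act   : finType;
  act0  : act;
  delta : st -> (Ag -> act) -> st;
  lab   : st -> {set AP}
}.

Section CGSDefs.
Variables (AP Ag : finType) (S : cgs AP Ag).

Definition successor (s s' : st S) : Prop := exists v : Ag -> act S, s' = delta s v.

Definition is_path (pi : nat -> st S) : Prop := forall n, successor (pi n) (pi n.+1).

Definition suffix (pi : nat -> st S) (i : nat) : nat -> st S := fun n => pi (i + n).

Definition prefix (pi : nat -> st S) (n : nat) : seq (st S) := mkseq pi n.+1.

(* A strategy maps (nonempty) histories to actions; it is only ever
   applied to nonempty histories. *)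
Definition strategy := seq (st S) -> act S.

(* A set F_A of strategies, one for each agent of A, is given by a
   family Ag -> strategy whose components outside A are irrelevant. *)
Definition stratset := Ag -> strategy.

Definition out (s : st S) (A : {set Ag}) (F : stratset) (pi : nat -> st S) : Prop :=
  pi 0 = s /\
  forall n, exists v : Ag -> act S,
    (forall a, a \in A -> v a = F a (prefix pi n)) /\ pi n.+1 = delta (pi n) v.

End CGSDefs.

Inductive B4 := b1111 | b0111 | b0011 | b0001 | b0000.

Definition rank (b : B4) : nat :=
  match b with b1111 => 4 | b0111 => 3 | b0011 => 2 | b0001 => 1 | b0000 => 0 end.

Definition B4le (b c : B4) : bool := (rank b <= rank c)%N.
Definition B4ge (b c : B4) : bool := B4le c b.

Definition B4max (b c : B4) : B4 := if B4le b c then c else b.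
Definition B4min (b c : B4) : B4 := if B4le b c then b else c.

Definition bit (b : B4) (k : nat) : bool :=
  match b, k with
  | b1111, (1|2|3|4) => true
  | b0111, (2|3|4) => true
  | b0011, (3|4) => true
  | b0001, 4 => true
  | _, _ => false
  end.

(* the element of B4 with bits b1 b2 b3 b4 (bits are always monotone in
   the uses below, so this is exact there) *)
Definition of_bits (x1 x2 x3 x4 : bool) : B4 :=
  if x1 then b1111 else if x2 then b0111 else if x3 then b0011
  else if x4 then b0001 else b0000.

Definition B4neg (b : B4) : B4 := if b is b1111 then b0000 else b1111.
Definition B4impl (b c : B4) : B4 := if B4le b c then b1111 else c.

Definition maxsat (P : B4 -> Prop) : B4 :=
  let d Q := if excluded_middle_informative Q then true else false in
  if d (P b1111) then b1111 else if d (P b0111) then b0111 else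
  if d (P b0011) then b0011 else if d (P b0001) then b0001 else b0000.

Definition pb (P : Prop) : bool := if excluded_middle_informative P then true else false.

Inductive rsform (AP Ag : finType) :=
| RAtom of AP
| RNot of rsform AP Ag
| ROr of rsform AP Ag & rsform AP Ag
| RAnd of rsform AP Ag & rsform AP Ag
| RImpl of rsform AP Ag & rsform AP Ag
| RExists of {set Ag} & rpform AP Ag
| RForall of {set Ag} & rpform AP Ag
with rpform (AP Ag : finType) :=
| RState of rsform AP Ag
| RPNot of rpform AP Ag
| RPOr of rpform AP Ag & rpform AP Ag
| RPAnd of rpform AP Ag & rpform AP Ag
| RPImpl of rpform AP Ag & rpform AP Ag
| RNext of rpform AP Ag
| REv of rpform AP Ag
| RAlw of rpform AP Ag.

Section RSem.
Variables (AP Ag : finType) (S : cgs AP Ag).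

Fixpoint rsval (s : st S) (f : rsform AP Ag) {struct f} : B4 :=
  match f with
  | RAtom p => if p \in lab s then b1111 else b0000
  | RNot g => B4neg (rsval s g)
  | ROr g h => B4max (rsval s g) (rsval s h)
  | RAnd g h => B4min (rsval s g) (rsval s h)
  | RImpl g h => B4impl (rsval s g) (rsval s h)
  | RExists A P => maxsat (fun b => exists F : stratset S,
                      forall pi, out s A F pi -> B4ge (rpval pi P) b)
  | RForall A P => maxsat (fun b => forall F : stratset S,
                      exists pi, out s A F pi /\ B4ge (rpval pi P) b)
  end
with rpval (pi : nat -> st S) (P : rpform AP Ag) {struct P} : B4 :=
  match P with
  | RState g => rsval (pi 0) g
  | RPNot Q => B4neg (rpval pi Q)
  | RPOr Q R => B4max (rpval pi Q) (rpval pi R)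
  | RPAnd Q R => B4min (rpval pi Q) (rpval pi R)
  | RPImpl Q R => B4impl (rpval pi Q) (rpval pi R)
  | RNext Q => rpval (suffix pi 1) Q
  | REv Q =>
      of_bits (pb (exists i, bit (rpval (suffix pi i) Q) 1))
              (pb (exists i, bit (rpval (suffix pi i) Q) 2))
              (pb (exists i, bit (rpval (suffix pi i) Q) 3))
              (pb (exists i, bit (rpval (suffix pi i) Q) 4))
  | RAlw Q =>
      of_bits (pb (forall i, bit (rpval (suffix pi i) Q) 1))
              (pb (exists i, forall j, (i <= j)%N -> bit (rpval (suffix pi j) Q) 2))
              (pb (forall i, exists j, (i <= j)%N /\ bit (rpval (suffix pi j) Q) 3))
              (pb (exists i, bit (rpval (suffix pi i) Q) 4))
  end.

End RSem.

Inductive asform (AP Ag : finType) :=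
| AAtom of AP
| ANot of asform AP Ag
| AOr of asform AP Ag & asform AP Ag
| AExists of {set Ag} & apform AP Ag
| AForall of {set Ag} & apform AP Ag
with apform (AP Ag : finType) :=
| AState of asform AP Ag
| APNot of apform AP Ag
| APOr of apform AP Ag & apform AP Ag
| ANext of apform AP Ag
| AEv of apform AP Ag
| AAlw of apform AP Ag.

Section ASem.
Variables (AP Ag : finType) (S : cgs AP Ag).

Fixpoint asat (s : st S) (f : asform AP Ag) {struct f} : Prop :=
  match f with
  | AAtom p => p \in lab s
  | ANot g => ~ asat s g
  | AOr g h => asat s g \/ asat s h
  | AExists A P => exists F : stratset S, forall pi, out s A F pi -> apsat pi P
  | AForall A P => forall F : stratset S, exists pi, out s A F pi /\ apsat pi P
  end
with apsat (pi : nat -> st S) (P : apform AP Ag) {struct P} : Prop :=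
  match P with
  | AState g => asat (pi 0) g
  | APNot Q => ~ apsat pi Q
  | APOr Q R => apsat pi Q \/ apsat pi R
  | ANext Q => apsat (suffix pi 1) Q
  | AEv Q => exists i, apsat (suffix pi i) Q
  | AAlw Q => forall i, apsat (suffix pi i) Q
  end.

End ASem.

(* Main.v *)
Require Import Defs.
From mathcomp Require Import all_boot.
From Stdlib Require Import ClassicalEpsilon FunctionalExtensionality Classical Setoid.
Set Implicit Arguments.
Unset Strict Implicit.

Definition kok (k : nat) := (0 < k <= 4)%N.

Lemma kcases (P : nat -> Prop) k : kok k -> P 1 -> P 2 -> P 3 -> P 4 -> P k.
Proof. by case: k => [|[|[|[|[|k]]]]]. Qed.

Lemma bit_neg b k : kok k -> bit (B4neg b) k = ~~ bit b 1.
Proof. by case: k => [|[|[|[|[|k]]]]] // _; case: b. Qed.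
Lemma bit_max b c k : kok k -> bit (B4max b c) k = bit b k || bit c k.
Proof. by case: k => [|[|[|[|[|k]]]]] // _; case: b; case: c. Qed.
Lemma bit_min b c k : kok k -> bit (B4min b c) k = bit b k && bit c k.
Proof. by case: k => [|[|[|[|[|k]]]]] // _; case: b; case: c. Qed.
Lemma bit_impl b c k : kok k -> bit (B4impl b c) k =
  [&& bit b 1 ==> bit c 1, bit b 2 ==> bit c 2, bit b 3 ==> bit c 3 & bit b 4 ==> bit c 4]
  || bit c k.
Proof. by case: k => [|[|[|[|[|k]]]]] // _; case: b; case: c. Qed.
Lemma bit_mono b : (bit b 1 -> bit b 2) /\ (bit b 2 -> bit b 3) /\ (bit b 3 -> bit b 4).
Proof. by case: b. Qed.

Definition thr (k : nat) : B4 :=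
  match k with 1 => b1111 | 2 => b0111 | 3 => b0011 | _ => b0001 end.
Lemma bit_thr v k : kok k -> bit v k = B4ge v (thr k).
Proof. by case: k => [|[|[|[|[|k]]]]] // _; case: v. Qed.

Lemma of_bitsE (x1 x2 x3 x4 : bool) k : (x1 -> x2) -> (x2 -> x3) -> (x3 -> x4) ->
  bit (of_bits x1 x2 x3 x4) k =
  match k with 1 => x1 | 2 => x2 | 3 => x3 | 4 => x4 | _ => false end.
Proof.
by case: x1; case: x2; case: x3; case: x4; case: k => [|[|[|[|[|k]]]]] //= h1 h2 h3;
  first [by move: (h1 isT) | by move: (h2 isT) | by move: (h3 isT)].
Qed.

Lemma pbP (P : Prop) : reflect P (pb P).
Proof. rewrite /pb; case: excluded_middle_informative => h; by constructor. Qed.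

Lemma maxsat_bit (P : B4 -> Prop) k :
  (forall b c, B4le c b -> P b -> P c) -> kok k ->
  bit (maxsat P) k <-> P (thr k).
Proof.
move=> Hd hk; rewrite /maxsat.
repeat (case: excluded_middle_informative => ?);
  case: k hk => [|[|[|[|[|k]]]]] // _ /=;
  split=> // H; try contradiction;
  first [by apply: (Hd b1111) | by apply: (Hd b0111) | by apply: (Hd b0011)
        | by apply: (Hd b0001)].
Qed.
Section Tr.
Variables AP Ag : finType.
Notation rs := (rsform AP Ag). Notation rp := (rpform AP Ag).
Notation as_ := (asform AP Ag). Notation ap := (apform AP Ag).

Definition aand (a b : as_) : as_ := ANot (AOr (ANot a) (ANot b)).
Definition apand (a b : ap) : ap := APNot (APOr (APNot a) (APNot b)).
Definition aimp (a b : as_) : as_ := AOr (ANot a) b.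
Definition apimp (a b : ap) : ap := APOr (APNot a) b.

Fixpoint trs (f : rs) (k : nat) {struct f} : as_ :=
  match f with
  | RAtom p => AAtom Ag p
  | RNot g => ANot (trs g 1)
  | ROr g h => AOr (trs g k) (trs h k)
  | RAnd g h => aand (trs g k) (trs h k)
  | RImpl g h => AOr (aand (aand (aimp (trs g 1) (trs h 1)) (aimp (trs g 2) (trs h 2)))
                            (aand (aimp (trs g 3) (trs h 3)) (aimp (trs g 4) (trs h 4))))
                      (trs h k)
  | RExists A P => AExists A (trp P k)
  | RForall A P => AForall A (trp P k)
  end
with trp (P : rp) (k : nat) {struct P} : ap :=
  match P with
  | RState g => AState (trs g k)
  | RPNot Q => APNot (trp Q 1)
  | RPOr Q R => APOr (trp Q k) (trp R k)
  | RPAnd Q R => apand (trp Q k) (trp R k)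
  | RPImpl Q R => APOr (apand (apand (apimp (trp Q 1) (trp R 1)) (apimp (trp Q 2) (trp R 2)))
                            (apand (apimp (trp Q 3) (trp R 3)) (apimp (trp Q 4) (trp R 4))))
                      (trp R k)
  | RNext Q => ANext (trp Q k)
  | REv Q => AEv (trp Q k)
  | RAlw Q => match k with
              | 1 => AAlw (trp Q 1)
              | 2 => AEv (AAlw (trp Q 2))
              | 3 => AAlw (AEv (trp Q 3))
              | _ => AEv (trp Q 4)
              end
  end.

Scheme rs_ind2 := Induction for rsform Sort Prop
with rp_ind2 := Induction for rpform Sort Prop.

Combined Scheme rs_rp_ind from rs_ind2, rp_ind2.

Variable S : cgs AP Ag.
Ltac fin := unfold is_true in *; intuition (try discriminate).

Lemma suffixS (pi : nat -> st S) i j : Defs.suffix (Defs.suffix pi i) j = Defs.suffix pi (i + j).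
Proof. by apply: functional_extensionality => n; rewrite /Defs.suffix addnA. Qed.

Lemma tr_correct :
  (forall f : rs, forall (s : st S) k, kok k -> (asat s (trs f k) <-> bit (rsval s f) k)) /\
  (forall P : rp, forall (pi : nat -> st S) k, kok k -> (apsat pi (trp P k) <-> bit (rpval pi P) k)).
Proof.
have Hdown1 : forall (A : {set Ag}) (s : st S) (P : rp),
  forall b c, B4le c b ->
   (exists F : stratset S, forall pi, out s A F pi -> B4ge (rpval pi P) b) ->
   (exists F : stratset S, forall pi, out s A F pi -> B4ge (rpval pi P) c).
  move=> A s P b c hcb [F HF]; exists F => pi /HF; rewrite /B4ge /B4le => h.
  exact: leq_trans h.
have Hdown2 : forall (A : {set Ag}) (s : st S) (P : rp),
  forall b c, B4le c b ->
   (forall F : stratset S, exists pi, out s A F pi /\ B4ge (rpval pi P) b) ->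
   (forall F : stratset S, exists pi, out s A F pi /\ B4ge (rpval pi P) c).
  move=> A s P b c hcb HF F; have [pi [ho h]] := HF F; exists pi; split => //.
  move: h; rewrite /B4ge /B4le => h; exact: leq_trans h.
apply: (@rs_rp_ind AP Ag
  (fun f => forall (s : st S) k, kok k -> (asat s (trs f k) <-> bit (rsval s f) k))
  (fun P => forall (pi : nat -> st S) k, kok k -> (apsat pi (trp P k) <-> bit (rpval pi P) k))).
- move=> p s k hk /=; case: (p \in lab s); case: k hk => [|[|[|[|[|k]]]]] //= _; fin.
- move=> g IH s k hk /=; rewrite (IH s 1 isT).
  case: (rsval s g); case: k hk => [|[|[|[|[|k]]]]] //= _; fin.
- move=> g IHg h IHh s k hk /=; rewrite (IHg s k hk) (IHh s k hk).
  case: (rsval s g); case: (rsval s h); case: k hk => [|[|[|[|[|k]]]]] //= _; fin.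
- move=> g IHg h IHh s k hk /=; rewrite (IHg s k hk) (IHh s k hk).
  case: (rsval s g); case: (rsval s h); case: k hk => [|[|[|[|[|k]]]]] //= _; fin.
- move=> g IHg h IHh s k hk /=; rewrite (IHh s k hk) (IHg s 1 isT) (IHg s 2 isT) (IHg s 3 isT) (IHg s 4 isT) (IHh s 1 isT) (IHh s 2 isT) (IHh s 3 isT) (IHh s 4 isT).
  case: (rsval s g); case: (rsval s h); case: k hk => [|[|[|[|[|k]]]]] //= _; fin.
- move=> A P IH s k hk /=; rewrite maxsat_bit //; last exact: Hdown1.
  split=> [[F HF]|[F HF]]; exists F => pi /HF; rewrite (IH pi k hk) bit_thr //.
- move=> A P IH s k hk /=; rewrite maxsat_bit //; last exact: Hdown2.
  split=> HF F; have [pi [ho h]] := HF F; exists pi; split => //; move: h;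
  rewrite (IH pi k hk) bit_thr //.
- by move=> g IH pi k hk /=; apply: IH.
- move=> g IH s k hk /=; rewrite (IH s 1 isT).
  case: (rpval s g); case: k hk => [|[|[|[|[|k]]]]] //= _; fin.
- move=> g IHg h IHh s k hk /=; rewrite (IHg s k hk) (IHh s k hk).
  case: (rpval s g); case: (rpval s h); case: k hk => [|[|[|[|[|k]]]]] //= _; fin.
- move=> g IHg h IHh s k hk /=; rewrite (IHg s k hk) (IHh s k hk).
  case: (rpval s g); case: (rpval s h); case: k hk => [|[|[|[|[|k]]]]] //= _; fin.
- move=> g IHg h IHh s k hk /=; rewrite (IHh s k hk) (IHg s 1 isT) (IHg s 2 isT) (IHg s 3 isT) (IHg s 4 isT) (IHh s 1 isT) (IHh s 2 isT) (IHh s 3 isT) (IHh s 4 isT).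
  case: (rpval s g); case: (rpval s h); case: k hk => [|[|[|[|[|k]]]]] //= _; fin.
- by move=> Q IH pi k hk /=; apply: IH.
- move=> Q IH pi k hk /=; rewrite of_bitsE.
  + case: k hk => [|[|[|[|[|k]]]]] // hk /=;
    (split=> [[i /(IH _ _ hk) h]|/pbP[i /(IH _ _ hk) h]]; [apply/pbP|]; by exists i).
  + by move=> /pbP[i h]; apply/pbP; exists i; move: h; case: (rpval _ _).
  + by move=> /pbP[i h]; apply/pbP; exists i; move: h; case: (rpval _ _).
  + by move=> /pbP[i h]; apply/pbP; exists i; move: h; case: (rpval _ _).
- move=> Q IH pi k hk /=; rewrite of_bitsE.
  + case: k hk => [|[|[|[|[|k]]]]] // hk /=.
    * split=> [h|/pbP h].
        by apply/pbP => i; apply/(IH _ _ hk).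
      by move=> i; apply/(IH _ _ hk).
    * split=> [[i h]|/pbP[i h]].
        apply/pbP; exists i => j hij; rewrite -(subnKC hij) -suffixS.
        by apply/(IH _ _ hk).
      exists i => j; rewrite suffixS; apply/(IH _ _ hk); apply: h; exact: leq_addr.
    * split=> [h|/pbP h].
        apply/pbP => i; have [j /(IH _ _ hk) hj] := h i; exists (i + j).
        by rewrite -suffixS; split => //; exact: leq_addr.
      move=> i; have [j [hij hj]] := h i; exists (j - i).
      by rewrite suffixS (subnKC hij); apply/(IH _ _ hk).
    * split=> [[i /(IH _ _ hk) h]|/pbP[i /(IH _ _ hk) h]]; [apply/pbP|]; by exists i.
  + move=> /pbP h; apply/pbP; exists 0 => j _; move: (h j); by case: (rpval _ _).
  + move=> /pbP[i h]; apply/pbP => i'; exists (maxn i i'); split; first exact: leq_maxr.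
    by move: (h (maxn i i') (leq_maxl _ _)); case: (rpval _ _).
  + move=> /pbP h; apply/pbP; have [j [_ hj]] := h 0; exists j; move: hj.
    by case: (rpval _ _).
Qed.
End Tr.
Section Tr2.
Variables AP Ag : finType.

Fixpoint fs (f : asform AP Ag) : rsform AP Ag :=
  match f with
  | AAtom p => RAtom Ag p
  | ANot g => RNot (fs g)
  | AOr g h => ROr (fs g) (fs h)
  | AExists A P => RExists A (fp P)
  | AForall A P => RForall A (fp P)
  end
with fp (P : apform AP Ag) : rpform AP Ag :=
  match P with
  | AState g => RState (fs g)
  | APNot Q => RPNot (fp Q)
  | APOr Q R => RPOr (fp Q) (fp R)
  | ANext Q => RNext (fp Q)
  | AEv Q => REv (fp Q)
  | AAlw Q => RAlw (fp Q)
  end.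

Scheme as_ind2 := Induction for asform Sort Prop
with ap_ind2 := Induction for apform Sort Prop.
Combined Scheme as_ap_ind from as_ind2, ap_ind2.

Lemma bit1E v : bit v 1 <-> v = b1111.
Proof. by case: v. Qed.
Lemma ge1E v : B4ge v b1111 <-> v = b1111.
Proof. by case: v. Qed.
Lemma of_bits1 x1 x2 x3 x4 : of_bits x1 x2 x3 x4 = b1111 <-> x1.
Proof. by case: x1 => //=; case: x2; case: x3; case: x4. Qed.
Lemma maxsat1 (P : B4 -> Prop) : maxsat P = b1111 <-> P b1111.
Proof.
rewrite /maxsat; case: excluded_middle_informative => h; first by [].
split=> H; last by [].
by move: H; repeat case: excluded_middle_informative.
Qed.
Lemma pbE (P : Prop) : pb P <-> P.
Proof. by split=> [/pbP|/pbP]. Qed.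

Variable S : cgs AP Ag.

Lemma f_correct :
  (forall f (s : st S), asat s f <-> rsval s (fs f) = b1111) /\
  (forall P (pi : nat -> st S), apsat pi P <-> rpval pi (fp P) = b1111).
Proof.
apply: (@as_ap_ind AP Ag
  (fun f => forall (s : st S), asat s f <-> rsval s (fs f) = b1111)
  (fun P => forall (pi : nat -> st S), apsat pi P <-> rpval pi (fp P) = b1111)).
- by move=> p s /=; case: (p \in lab s).
- move=> g IH s /=; rewrite IH; case: (rsval s (fs g)) => //=; intuition discriminate.
- move=> g IHg h IHh s /=; rewrite IHg IHh.
  by case: (rsval s (fs g)); case: (rsval s (fs h)) => /=; intuition discriminate.
- move=> A P IH s /=; rewrite maxsat1.
  by split=> [[F HF]|[F HF]]; exists F => pi /HF; rewrite ge1E IH.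
- move=> A P IH s /=; rewrite maxsat1.
  by split=> HF F; have [pi [ho h]] := HF F; exists pi; split => //; move: h; rewrite ge1E IH.
- by move=> g IH pi /=.
- move=> g IH s /=; rewrite IH; case: (rpval s (fp g)) => //=; intuition discriminate.
- move=> g IHg h IHh s /=; rewrite IHg IHh.
  by case: (rpval s (fp g)); case: (rpval s (fp h)) => /=; intuition discriminate.
- by move=> g IH pi /=.
- move=> Q IH pi /=; rewrite of_bits1 pbE.
  by split=> [[i h]|[i h]]; exists i; move: h; rewrite bit1E IH.
- move=> Q IH pi /=; rewrite of_bits1 pbE.
  by split=> h i; move: (h i); rewrite bit1E IH.
Qed.
End Tr2.

Theorem corollary2 (AP Ag : finType) :
  (forall (phi : rsform AP Ag) (t : B4),
     exists phi_t : asform AP Ag,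
       forall (S : cgs AP Ag) (s : st S),
         B4ge (rsval s phi) t <-> asat s phi_t)
  /\
  (forall psi : asform AP Ag,
     exists psi_star : rsform AP Ag,
       forall (S : cgs AP Ag) (s : st S),
         asat s psi <-> rsval s psi_star = b1111).
Proof.
split.
- move=> phi t.
  exists (match t with
          | b1111 => trs phi 1 | b0111 => trs phi 2 | b0011 => trs phi 3
          | b0001 => trs phi 4 | b0000 => AOr (trs phi 1) (ANot (trs phi 1)) end).
  move=> S s; have [H _] := tr_correct S.
  case: t.
  + by rewrite (H phi s 1 isT) (bit_thr _ (k := 1)).
  + by rewrite (H phi s 2 isT) (bit_thr _ (k := 2)).
  + by rewrite (H phi s 3 isT) (bit_thr _ (k := 3)).
  + by rewrite (H phi s 4 isT) (bit_thr _ (k := 4)).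
  + split=> _ /=; last by case: (rsval s phi).
    exact: classic.
- move=> psi; exists (fs psi) => S s; exact: (proj1 (f_correct S)).
Qed.
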